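(* Let $k$ be a field, $B$ a unital associative $k$-algebra and $(J_i)_{i\in I}$ a covering of $B$, i.e.\ a finite family of two-sided ideals with $\bigcap_{i\in I}J_i=\{0\}$. Let $B_i=B/J_i$, $B_{ij}=B/(J_i+J_j)$, $\pi_i:B\to B_i$, $\pi_{ij}:B\to B_{ij}$, $\pi^i_j:B_i\to B_{ij}$ the canonical surjections, $A=\bigoplus_{i\in I}B_i$, and let $\mathcal{C}=\bigoplus_{i,j\in I}B_{ij}$ be the $A$-coring with bimodule structure $(a_i)_i\cdot(a_{jk})_{j,k}\cdot(a'_l)_l=(\pi^j_k(a_j)a_{jk}\pi^k_j(a'_k))_{j,k}$, coproduct $\Delta_{\mathcal{C}}((\pi_{ij}(b_{ij}))_{i,j})=\sum_{k\in I}(\pi_{il}(b_{ik}))_{i,l}\otimes_A(\pi_{mj}(\delta_{kj}1_B))_{m,j}$ and counit $\varepsilon_{\mathcal{C}}((\pi_{ij}(b_{ij}))_{i,j})=(\pi_i(b_{ii}))_i$. Set $g=(\pi_{ij}(1_B))_{i,j\in I}\in\mathcal{C}$. Then: (1) If $(J_i)_{i\in I}$ is a complete covering of $B$, then $(\mathcal{C},g)$ is a Galois coring. (2) If $A$ is a faithfully flat left or right $B$-module, then $(J_i)_{i\in I}$ is a complete covering of $B$.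
   Context: $\delta_{kj}1_B$ is $1_B$ if $k=j$ and $0$ otherwise. $A$ is a $B$-bimodule via the algebra map $\iota:B\to A$, $b\mapsto(\pi_i(b))_{i\in I}$. The covering completion of $B$ is $B_c=\{(a_i)_{i\in I}\in A:\ \pi^i_j(a_i)=\pi^j_i(a_j)\text{ for all }i,j\}$; the covering is complete if $\kappa:B\to B_c$, $b\mapsto(\pi_i(b))_{i\in I}$, is surjective. For an $A$-coring $\mathcal{C}$ (an $A$-bimodule with coassociative counital $A$-bimodule maps $\Delta_{\mathcal{C}}:\mathcal{C}\to\mathcal{C}\otimes_A\mathcal{C}$, $\varepsilon_{\mathcal{C}}:\mathcal{C}\to A$), an element $g$ is grouplike if $\Delta_{\mathcal{C}}(g)=g\otimes_A g$ and $\varepsilon_{\mathcal{C}}(g)=1_A$; its coinvariants are $A^{co\mathcal{C}}_g=\{b\in A: b\cdot g=g\cdot b\}$, a subalgebra of $A$. $(\mathcal{C},g)$ with $g$ grouplike is a Galois coring if, with $B'=A^{co\mathcal{C}}_g$, the map $A\otimes_{B'}A\to\mathcal{C}$, $a\otimes_{B'}a'\mapsto a\cdot g\cdot a'$, is an isomorphism. *)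

(* Defs.v *)
From HB Require Import structures.
From mathcomp Require Import all_boot all_algebra.


Import GRing.Theory.
Local Open Scope ring_scope.

Section DProd.
Variables (I : finType) (R : I -> zmodType).

Definition dprod := {dffun forall i : I, R i}.
HB.instance Definition _ := Choice.on dprod.

Definition dp0 : dprod := [ffun i => 0].
Definition dpadd (f g : dprod) : dprod := [ffun i => f i + g i].
Definition dpopp (f : dprod) : dprod := [ffun i => - f i].

Lemma dpaddA : associative dpadd.
Proof. by move=> f g h; apply/ffunP=> i; rewrite !ffunE addrA. Qed.
Lemma dpaddC : commutative dpadd.
Proof. by move=> f g; apply/ffunP=> i; rewrite !ffunE addrC. Qed.
Lemma dpadd0 : left_id dp0 dpadd.
Proof. by move=> f; apply/ffunP=> i; rewrite !ffunE add0r. Qed.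
Lemma dpaddN : left_inverse dp0 dpopp dpadd.
Proof. by move=> f; apply/ffunP=> i; rewrite !ffunE addNr. Qed.

HB.instance Definition _ :=
  GRing.isZmodule.Build dprod dpaddA dpaddC dpadd0 dpaddN.
End DProd.

Definition additive_fun (M N : zmodType) (h : M -> N) : Prop :=
  forall x y, h (x + y) = h x + h y.

Definition balanced (Rs : Type) (S : Rs -> Prop) (M N X : zmodType)
    (actM : M -> Rs -> M) (actN : Rs -> N -> N) (f : M -> N -> X) : Prop :=
  [/\ forall m m' n, f (m + m') n = f m n + f m' n,
      forall m n n', f m (n + n') = f m n + f m n' &
      forall m r n, S r -> f (actM m r) n = f m (actN r n)].

Definition is_tensor_product (Rs : Type) (S : Rs -> Prop) (M N T : zmodType)
    (actM : M -> Rs -> M) (actN : Rs -> N -> N) (t : M -> N -> T) : Prop :=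
  balanced Rs S M N T actM actN t /\
  forall (X : zmodType) (f : M -> N -> X), balanced Rs S M N X actM actN f ->
    exists h : T -> X,
      [/\ additive_fun T X h, (forall m n, h (t m n) = f m n) &
          forall h' : T -> X, additive_fun T X h' ->
            (forall m n, h' (t m n) = f m n) -> forall x, h' x = h x].

Definition rmodule (Rg : pzRingType) (M : zmodType) (act : M -> Rg -> M) :=
  [/\ forall m, act m 1 = m,
      forall m a b, act (act m a) b = act m (a * b),
      forall m m' a, act (m + m') a = act m a + act m' a &
      forall m a b, act m (a + b) = act m a + act m b].

Definition lmodule (Rg : pzRingType) (M : zmodType) (act : Rg -> M -> M) :=
  [/\ forall m, act 1 m = m,
      forall m a b, act a (act b m) = act (a * b) m,
      forall m m' a, act a (m + m') = act a m + act a m' &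
      forall m a b, act (a + b) m = act a m + act b m].

Definition rlinear (Rg : pzRingType) (M M' : zmodType)
    (act : M -> Rg -> M) (act' : M' -> Rg -> M') (f : M -> M') :=
  additive_fun M M' f /\ forall m a, f (act m a) = act' (f m) a.

Definition llinear (Rg : pzRingType) (M M' : zmodType)
    (act : Rg -> M -> M) (act' : Rg -> M' -> M') (f : M -> M') :=
  additive_fun M M' f /\ forall m a, f (act a m) = act' a (f m).

Definition exact_at (M1 M2 M3 : zmodType) (f : M1 -> M2) (g : M2 -> M3) :=
  forall y, g y = 0 <-> exists x, f x = y.

Definition faithfully_flat_left (Rg : pzRingType) (N : zmodType)
    (actN : Rg -> N -> N) : Prop :=
  lmodule Rg N actN /\
  forall (M1 M2 M3 : zmodType) (a1 : M1 -> Rg -> M1) (a2 : M2 -> Rg -> M2)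
         (a3 : M3 -> Rg -> M3) (f : M1 -> M2) (g : M2 -> M3),
    rmodule Rg M1 a1 -> rmodule Rg M2 a2 -> rmodule Rg M3 a3 ->
    rlinear Rg M1 M2 a1 a2 f -> rlinear Rg M2 M3 a2 a3 g ->
  forall (T1 T2 T3 : zmodType) (t1 : M1 -> N -> T1) (t2 : M2 -> N -> T2)
         (t3 : M3 -> N -> T3),
    is_tensor_product Rg (fun _ : Rg => True) M1 N T1 a1 actN t1 ->
    is_tensor_product Rg (fun _ : Rg => True) M2 N T2 a2 actN t2 ->
    is_tensor_product Rg (fun _ : Rg => True) M3 N T3 a3 actN t3 ->
  forall (F : T1 -> T2) (G : T2 -> T3), additive_fun T1 T2 F -> additive_fun T2 T3 G ->
    (forall m n, F (t1 m n) = t2 (f m) n) ->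
    (forall m n, G (t2 m n) = t3 (g m) n) ->
    (exact_at M1 M2 M3 f g <-> exact_at T1 T2 T3 F G).

Definition faithfully_flat_right (Rg : pzRingType) (N : zmodType)
    (actN : N -> Rg -> N) : Prop :=
  rmodule Rg N actN /\
  forall (M1 M2 M3 : zmodType) (a1 : Rg -> M1 -> M1) (a2 : Rg -> M2 -> M2)
         (a3 : Rg -> M3 -> M3) (f : M1 -> M2) (g : M2 -> M3),
    lmodule Rg M1 a1 -> lmodule Rg M2 a2 -> lmodule Rg M3 a3 ->
    llinear Rg M1 M2 a1 a2 f -> llinear Rg M2 M3 a2 a3 g ->
  forall (T1 T2 T3 : zmodType) (t1 : N -> M1 -> T1) (t2 : N -> M2 -> T2)
         (t3 : N -> M3 -> T3),
    is_tensor_product Rg (fun _ : Rg => True) N M1 T1 actN a1 t1 ->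
    is_tensor_product Rg (fun _ : Rg => True) N M2 T2 actN a2 t2 ->
    is_tensor_product Rg (fun _ : Rg => True) N M3 T3 actN a3 t3 ->
  forall (F : T1 -> T2) (G : T2 -> T3), additive_fun T1 T2 F -> additive_fun T2 T3 G ->
    (forall n m, F (t1 n m) = t2 n (f m)) ->
    (forall n m, G (t2 n m) = t3 n (g m)) ->
    (exact_at M1 M2 M3 f g <-> exact_at T1 T2 T3 F G).

(* A unital associative k-algebra (possibly zero) is given as a ring B      *)
(* together with a ring morphism k -> B landing in the centre of B.        *)
Definition central_structure_map (k B : pzRingType) (alg : k -> B) : Prop :=
  forall (c : k) (b : B), alg c * b = b * alg c.

(* Two-sided ideals (of the ring B; for a k-algebra these are automatically *)
(* k-subspaces, since c.x = alg c * x).                                    *)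
Definition two_sided_ideal (B : pzRingType) (J : B -> Prop) :=
  [/\ J 0,
      forall x y, J x -> J y -> J (x + y),
      forall x, J x -> J (- x) &
      forall a x b, J x -> J (a * x * b)].

(* The covering data: B_i = B/J_i (Bq i, projection p i), B_ij = B/(J_i+J_j) *)
(* (Bqq i j, projection pij i j), pi^i_j : B_i -> B_ij is pl i j and         *)
(* pi^j_i : B_j -> B_ij (= B_ji) is pr i j.                                  *)
Section Covering.
Variables (B : pzRingType) (I : finType).
Variables (Bq : I -> pzRingType) (Bqq : I -> I -> pzRingType).
Variables (p : forall i, B -> Bq i) (pij : forall i j, B -> Bqq i j).
Variables (pl : forall i j, Bq i -> Bqq i j) (pr : forall i j, Bq j -> Bqq i j).

Definition Aty := dprod I (fun i => Bq i).
Definition Cty := dprod (I * I)%type (fun ij : I * I => Bqq ij.1 ij.2).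

Definition mulA (a a' : Aty) : Aty := @finfun _ (fun i => Bq i) (fun i => a i * a' i).
Definition oneA : Aty := @finfun _ (fun i => Bq i) (fun i => 1).

Definition lactBA (b : B) (a : Aty) : Aty := @finfun _ (fun i => Bq i) (fun i => p i b * a i).
Definition ractAB (a : Aty) (b : B) : Aty := @finfun _ (fun i => Bq i) (fun i => a i * p i b).

Definition lactC (a : Aty) (c : Cty) : Cty :=
  @finfun _ (fun ij : I * I => Bqq ij.1 ij.2)
    (fun ij : I * I => pl ij.1 ij.2 (a ij.1) * c ij).
Definition ractC (c : Cty) (a : Aty) : Cty :=
  @finfun _ (fun ij : I * I => Bqq ij.1 ij.2)
    (fun ij : I * I => c ij * pr ij.1 ij.2 (a ij.2)).

Definition gC : Cty := @finfun _ (fun ij : I * I => Bqq ij.1 ij.2)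
    (fun ij : I * I => pij ij.1 ij.2 1).

Definition counit_is (c : Cty) (a : Aty) : Prop :=
  forall b : I -> I -> B, (forall i j, pij i j (b i j) = c (i, j)) ->
    forall i, a i = p i (b i i).

Definition coprod_is (T : zmodType) (t : Cty -> Cty -> T) (c : Cty) (x : T)
  : Prop :=
  forall b : I -> I -> B, (forall i j, pij i j (b i j) = c (i, j)) ->
    x = \sum_(kk : I)
          t (@finfun _ (fun ij : I * I => Bqq ij.1 ij.2)
               (fun il : I * I => pij il.1 il.2 (b il.1 kk)))
            (@finfun _ (fun ij : I * I => Bqq ij.1 ij.2)
               (fun mj : I * I => pij mj.1 mj.2 (if kk == mj.2 then 1 else 0))).

Definition grouplike (g : Cty) : Prop :=
  counit_is g oneA /\
  forall (T : zmodType) (t : Cty -> Cty -> T),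
    is_tensor_product Aty (fun _ : Aty => True) Cty Cty T ractC lactC t ->
    coprod_is T t g (t g g).

Definition coinv (g : Cty) (a : Aty) : Prop := lactC a g = ractC g a.

(* (C, g) is a Galois coring: g grouplike and                              *)
(* A (x)_{B'} A -> C, a (x) a' |-> a.g.a' is an isomorphism, i.e. (C, that  *)
(* balanced map) is a tensor product A (x)_{B'} A, with B' = coinv g.      *)
Definition galois_coring (g : Cty) : Prop :=
  grouplike g /\
  is_tensor_product Aty (coinv g) Aty Aty Cty mulA mulA
    (fun a a' => lactC a (ractC g a')).

Definition in_completion (a : Aty) : Prop :=
  forall i j, pl i j (a i) = pr i j (a j).

Definition complete_covering : Prop :=
  forall a : Aty, in_completion a -> exists b : B, forall i, p i b = a i.

End Covering.

(* Main.v *)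
From HB Require Import structures.
From mathcomp Require Import all_boot all_algebra.
From Stdlib Require Import ClassicalEpsilon.
Require Import Defs.
Import GRing.Theory.
Local Open Scope ring_scope.


Definition pb (P : Prop) : bool := if excluded_middle_informative P then true else false.
Lemma pbP (P : Prop) : reflect P (pb P).
Proof. by rewrite /pb; case: excluded_middle_informative => h; constructor. Qed.

Record subgrp (V : zmodType) := SubGrp {
  sgK :> V -> Prop;
  sg0 : sgK 0;
  sgD : forall x y, sgK x -> sgK y -> sgK (x + y);
  sgN : forall x, sgK x -> sgK (- x) }.

Section Quo.
Variables (V : zmodType) (S : subgrp V).

Lemma sgB x y : S x -> S y -> S (x - y).
Proof. by move=> hx hy; apply: sgD => //; apply: sgN. Qed.

Definition cpred (v : V) : pred V := fun w => pb (S (w - v) \/ w = v).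
Lemma cpred_ex v : exists w, cpred v w.
Proof. by exists v; apply/pbP; right. Qed.
Definition canon v : V := xchoose (cpred_ex v).

Lemma canon_rel v : S (canon v - v).
Proof.
rewrite /canon; have /pbP [//|->] := xchooseP (cpred_ex v).
by rewrite subrr; apply: sg0.
Qed.

Lemma canon_eq v w : S (v - w) -> canon v = canon w.
Proof.
move=> h; apply: eq_xchoose => u; apply/pbP/pbP.
- case=> [h1|->]; left.
  + have -> : u - w = (u - v) + (v - w) by rewrite addrA subrK.
    by apply: sgD.
  + by [].
- case=> [h1|->]; left.
  + have -> : u - v = (u - w) - (v - w) by rewrite opprB addrA subrK.
    by apply: sgB.
  + have -> : w - v = - (v - w) by rewrite opprB.
    by apply: sgN.
Qed.

Lemma canon_canon v : canon (canon v) == canon v.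
Proof. by apply/eqP/canon_eq/canon_rel. Qed.

Definition quo := {v : V | canon v == v}.
HB.instance Definition _ := Choice.on quo.

Definition qpi (v : V) : quo := exist _ (canon v) (canon_canon v).

Lemma qpi_val (x : quo) : qpi (val x) = x.
Proof. by case: x => v hv; apply: val_inj => /=; apply/eqP. Qed.

Lemma qpi_eq v w : qpi v = qpi w <-> S (v - w).
Proof.
split; last by move=> h; apply: val_inj => /=; apply: canon_eq.
move=> /(congr1 val) /= e.
have -> : v - w = - (canon v - v) + (canon w - w) by rewrite e opprB addrA subrK.
by apply: sgD; [apply: sgN|]; apply: canon_rel.
Qed.

Lemma qpi_val_rel v : S (val (qpi v) - v).
Proof. exact: canon_rel. Qed.

Definition qadd (x y : quo) : quo := qpi (val x + val y).
Definition qopp (x : quo) : quo := qpi (- val x).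
Definition qzero : quo := qpi 0.

Lemma qaddE v w : qadd (qpi v) (qpi w) = qpi (v + w).
Proof.
apply/qpi_eq.
have -> : val (qpi v) + val (qpi w) - (v + w) = (val (qpi v) - v) + (val (qpi w) - w).
  by rewrite opprD addrACA.
by apply: sgD; apply: qpi_val_rel.
Qed.
Lemma qoppE v : qopp (qpi v) = qpi (- v).
Proof.
apply/qpi_eq.
have -> : - val (qpi v) - - v = - (val (qpi v) - v) by rewrite opprB opprK addrC.
by apply: sgN; apply: qpi_val_rel.
Qed.

Lemma qaddA : associative qadd.
Proof.
move=> x y z; rewrite -(qpi_val x) -(qpi_val y) -(qpi_val z).
by rewrite !qaddE addrA.
Qed.
Lemma qaddC : commutative qadd.
Proof. by move=> x y; rewrite -(qpi_val x) -(qpi_val y) !qaddE addrC. Qed.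
Lemma qadd0 : left_id qzero qadd.
Proof. by move=> x; rewrite -(qpi_val x) /qzero qaddE add0r. Qed.
Lemma qaddN : left_inverse qzero qopp qadd.
Proof. by move=> x; rewrite -(qpi_val x) qoppE qaddE addNr. Qed.

HB.instance Definition _ := GRing.isZmodule.Build quo qaddA qaddC qadd0 qaddN.

Lemma qpiD v w : qpi (v + w) = qpi v + qpi w.
Proof. by rewrite -qaddE. Qed.
Lemma qpi0 : qpi 0 = 0.
Proof. by []. Qed.
Lemma qpi_eq0 v : qpi v = 0 <-> S v.
Proof. by rewrite -qpi0 qpi_eq subr0. Qed.
Lemma qpi_surj (x : quo) : exists v, qpi v = x.
Proof. by exists (val x); apply: qpi_val. Qed.
End Quo.
Arguments qpi {V} S v.
Arguments qpi_val {V S} x.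
Arguments qpi_eq {V} S v w.
Arguments qpiD {V} S v w.
Arguments qpi_eq0 {V} S v.
Lemma qpiN (V : zmodType) (S : subgrp V) v : qpi S (- v) = - qpi S v.
Proof. by rewrite -qoppE. Qed.
Arguments qpiN {V} S v.

Lemma dpaddE (I : finType) (R : I -> zmodType) (f g : dprod I R) i : (f + g) i = f i + g i.
Proof. by rewrite /GRing.add /= /dpadd ffunE. Qed.
Lemma dp0E (I : finType) (R : I -> zmodType) i : (0 : dprod I R) i = 0.
Proof. by rewrite /GRing.zero /= /dp0 ffunE. Qed.
Lemma dpoppE (I : finType) (R : I -> zmodType) (f : dprod I R) i : (- f) i = - f i.
Proof. by rewrite /GRing.opp /= /dpopp ffunE. Qed.
Lemma dpsubE (I : finType) (R : I -> zmodType) (f g : dprod I R) i : (f - g) i = f i - g i.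
Proof. by rewrite dpaddE dpoppE. Qed.
Lemma dpsumE (I : finType) (R : I -> zmodType) (J : finType) (F : J -> dprod I R) i :
  (\sum_j F j) i = \sum_j F j i.
Proof.
apply: (big_rec2 (fun (x : dprod I R) y => x i = y)); first by rewrite dp0E.
by move=> j x y _ <-; rewrite dpaddE.
Qed.
Lemma dpext (I : finType) (R : I -> zmodType) (f g : dprod I R) :
  (forall i, f i = g i) -> f = g.
Proof. by move=> h; apply/ffunP. Qed.

Section Add.
Variables (M N : zmodType) (h : M -> N) (hA : additive_fun M N h).
Lemma af0 : h 0 = 0.
Proof. have e := hA 0 0; rewrite addr0 in e. by apply: (addrI (h 0)); rewrite -e addr0. Qed.
Lemma afN x : h (- x) = - h x.
Proof. by apply/eqP; rewrite -subr_eq0 opprK -hA addNr af0. Qed.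
Lemma afB x y : h (x - y) = h x - h y.
Proof. by rewrite hA afN. Qed.
Lemma afsum (J : Type) (r : seq J) (P : pred J) (F : J -> M) :
  h (\sum_(j <- r | P j) F j) = \sum_(j <- r | P j) h (F j).
Proof. exact: (big_morph h hA af0). Qed.
End Add.
Arguments af0 {M N h} hA.
Arguments afN {M N h} hA x.
Arguments afB {M N h} hA x y.
Arguments afsum {M N h} hA {J} r P F.

Section Main.
Variables (B : pzRingType) (I : finType) (J : I -> B -> Prop).
Hypothesis J_ideal : forall i, two_sided_ideal B (J i).
Variables (Bq : I -> pzRingType) (p : forall i, {rmorphism B -> Bq i}).
Hypothesis p_surj : forall i (y : Bq i), exists b : B, p i b = y.
Hypothesis p_ker : forall i (b : B), p i b = 0 <-> J i b.
Variables (Bqq : I -> I -> pzRingType) (pij : forall i j, {rmorphism B -> Bqq i j}).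
Hypothesis pij_surj : forall i j (y : Bqq i j), exists b : B, pij i j b = y.
Hypothesis pij_ker : forall i j (b : B),
      pij i j b = 0 <-> exists x y, [/\ J i x, J j y & b = x + y].
Variables (pl : forall i j, {rmorphism Bq i -> Bqq i j}).
Hypothesis pl_comp : forall i j (b : B), pl i j (p i b) = pij i j b.
Variables (pr : forall i j, {rmorphism Bq j -> Bqq i j}).
Hypothesis pr_comp : forall i j (b : B), pr i j (p j b) = pij i j b.

Local Notation A := (Aty I Bq).
Local Notation C := (Cty I Bqq).
Local Notation ract := (ractAB B I Bq (fun i b => p i b)).
Local Notation lact := (lactBA B I Bq (fun i b => p i b)).

Definition mkA (F : forall i, Bq i) : A := @finfun I (fun i => Bq i) F.
Definition mkC (F : forall ij : I * I, Bqq ij.1 ij.2) : C :=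
  @finfun _ (fun ij : I * I => Bqq ij.1 ij.2) F.
Definition iota (b : B) : A := mkA (fun i => p i b).
Definition ee (i : I) : A := mkA (fun j => if i == j then 1 else 0).
Definition t2 (a a' : A) : C :=
  mkC (fun ij => pl ij.1 ij.2 (a ij.1) * pr ij.1 ij.2 (a' ij.2)).

Definition liftA i (y : Bq i) : B :=
  proj1_sig (constructive_indefinite_description _ (p_surj i y)).
Lemma liftAE i y : p i (liftA i y) = y.
Proof. exact: (proj2_sig (constructive_indefinite_description _ (p_surj i y))). Qed.
Definition liftC i j (y : Bqq i j) : B :=
  proj1_sig (constructive_indefinite_description _ (pij_surj i j y)).
Lemma liftCE i j y : pij i j (liftC i j y) = y.
Proof. exact: (proj2_sig (constructive_indefinite_description _ (pij_surj i j y))). Qed.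

Lemma J0 i : J i 0. Proof. by case: (J_ideal i). Qed.
Lemma JD i x y : J i x -> J i y -> J i (x + y). Proof. by case: (J_ideal i) => _ h _ _; apply: h. Qed.
Lemma JN i x : J i x -> J i (- x). Proof. by case: (J_ideal i) => _ _ h _; apply: h. Qed.
Lemma JB i x y : J i x -> J i y -> J i (x - y). Proof. by move=> *; apply: JD => //; apply: JN. Qed.
Lemma JMl i a x : J i x -> J i (a * x).
Proof. by case: (J_ideal i) => _ _ _ h hx; rewrite -[_ * _]mulr1; apply: h. Qed.
Lemma JMr i x b : J i x -> J i (x * b).
Proof. by case: (J_ideal i) => _ _ _ h hx; rewrite -[x]mul1r; apply: h. Qed.
Lemma p_J i x : J i x -> p i x = 0. Proof. by move/p_ker. Qed.
Lemma pij_Jl i j x : J i x -> pij i j x = 0.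
Proof. by move=> hx; apply/pij_ker; exists x, 0; split=> //; [apply: J0 | rewrite addr0]. Qed.
Lemma pij_Jr i j x : J j x -> pij i j x = 0.
Proof. by move=> hx; apply/pij_ker; exists 0, x; split=> //; [apply: J0 | rewrite add0r]. Qed.

Lemma mkAE F i : mkA F i = F i. Proof. by rewrite ffunE. Qed.
Lemma mkCE F ij : mkC F ij = F ij. Proof. by rewrite ffunE. Qed.
Lemma ractE a b i : ract a b i = a i * p i b. Proof. by rewrite ffunE. Qed.
Lemma lactE b a i : lact b a i = p i b * a i. Proof. by rewrite ffunE. Qed.
Lemma t2E a a' ij : t2 a a' ij = pl ij.1 ij.2 (a ij.1) * pr ij.1 ij.2 (a' ij.2).
Proof. by rewrite ffunE. Qed.

Lemma ractD a b b' : ract a (b + b') = ract a b + ract a b'.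
Proof. by apply: dpext => i; rewrite dpaddE !ractE rmorphD mulrDr. Qed.
Lemma ractM a b b' : ract (ract a b) b' = ract a (b * b').
Proof. by apply: dpext => i; rewrite !ractE rmorphM mulrA. Qed.
Lemma ee_ract_J i x : J i x -> ract (ee i) x = 0.
Proof.
move=> hx; apply: dpext => k; rewrite ractE dp0E mkAE.
by case: eqP => [<-|_]; [rewrite p_J // mulr0 | rewrite mul0r].
Qed.
Lemma ee_lact_J i x : J i x -> lact x (ee i) = 0.
Proof.
move=> hx; apply: dpext => k; rewrite lactE dp0E mkAE.
by case: eqP => [<-|_]; [rewrite p_J // mul0r | rewrite mulr0].
Qed.

Lemma decompA (a : A) : a = \sum_i ract (ee i) (liftA i (a i)).
Proof.
apply: dpext => k; rewrite dpsumE (bigD1 k) //= ractE mkAE eqxx mul1r liftAE.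
by rewrite big1 ?addr0 // => i /negbTE ik; rewrite ractE mkAE ik mul0r.
Qed.
Lemma decompA' (a : A) : a = \sum_i lact (liftA i (a i)) (ee i).
Proof.
apply: dpext => k; rewrite dpsumE (bigD1 k) //= lactE mkAE eqxx mulr1 liftAE.
by rewrite big1 ?addr0 // => i /negbTE ik; rewrite lactE mkAE ik mulr0.
Qed.

Lemma decompC (c : C) :
  c = \sum_(ij : I * I) t2 (ract (ee ij.1) (liftC _ _ (c ij))) (ee ij.2).
Proof.
apply: dpext => [[i' j']]; rewrite dpsumE (bigD1 (i', j')) //= t2E ractE !mkAE /=.
rewrite !eqxx mul1r rmorph1 mulr1 pl_comp liftCE big1 ?addr0 // => -[i j] /= ne.
rewrite t2E ractE !mkAE /=.
case: (eqVneq i i') => [ei|_]; last by rewrite mul0r rmorph0 mul0r.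
case: (eqVneq j j') => [ej|_]; last by rewrite rmorph0 mulr0.
by move: ne; rewrite ei ej eqxx.
Qed.

Lemma tensAA (X : zmodType) (f : A -> A -> X) :
  (forall a a' a'', f (a + a') a'' = f a a'' + f a' a'') ->
  (forall a a' a'', f a (a' + a'') = f a a' + f a a'') ->
  (forall a b a', f (ract a b) a' = f a (lact b a')) ->
  exists h : C -> X, [/\ additive_fun C X h, (forall a a', h (t2 a a') = f a a') &
     forall h' : C -> X, additive_fun C X h' ->
       (forall a a', h' (t2 a a') = f a a') -> forall x, h' x = h x].
Proof.
move=> f1 f2 fb.
have af1 a'' : additive_fun A X (f ^~ a'') by move=> x y; apply: f1.
have af2 a : additive_fun A X (f a) by move=> x y; apply: f2.
pose F i j b := f (ract (ee i) b) (ee j).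
have FD i j b b' : F i j (b + b') = F i j b + F i j b' by rewrite /F ractD f1.
have Fker i j b : pij i j b = 0 -> F i j b = 0.
  case/pij_ker=> x [y [hx hy ->]]; rewrite FD /F ee_ract_J // (af0 (af1 _)) add0r.
  by rewrite fb ee_lact_J // (af0 (af2 _)).
have Feq i j b b' : pij i j b = pij i j b' -> F i j b = F i j b'.
  move=> e; rewrite -(subrK b' b) FD Fker ?add0r //.
  by rewrite rmorphB e subrr.
pose h (c : C) := \sum_(ij : I * I) F ij.1 ij.2 (liftC _ _ (c ij)).
exists h; split.
- move=> c c'; rewrite /h -big_split; apply: eq_bigr => ij _ /=.
  by rewrite -FD; apply: Feq; rewrite rmorphD !liftCE dpaddE.
- move=> a a'; rewrite /h.
  have -> : f a a' = \sum_i \sum_j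
      f (ract (ee i) (liftA i (a i))) (lact (liftA j (a' j)) (ee j)).
    rewrite {1}(decompA a) (afsum (af1 _)); apply: eq_bigr => i _.
    by rewrite {1}(decompA' a') (afsum (af2 _)).
  rewrite pair_big; apply: eq_bigr => -[i j] _ /=.
  rewrite -fb ractM -/(F i j _).
  apply: Feq; rewrite liftCE t2E /= rmorphM -pl_comp -pr_comp !liftAE.
  by [].
- move=> h' ah' h't x; rewrite [in LHS](decompC x) (afsum ah').
  by apply: eq_bigr => ij _; rewrite h't.
Qed.

Local Notation g := (gC B I Bqq (fun i j b => pij i j b)).
Local Notation lC := (lactC I Bq Bqq (fun i j x => pl i j x)).
Local Notation rC := (ractC I Bq Bqq (fun i j x => pr i j x)).

Lemma gE ij : g ij = 1. Proof. by rewrite ffunE rmorph1. Qed.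
Lemma lCE a c ij : lC a c ij = pl ij.1 ij.2 (a ij.1) * c ij. Proof. by rewrite ffunE. Qed.
Lemma rCE c a ij : rC c a ij = c ij * pr ij.1 ij.2 (a ij.2). Proof. by rewrite ffunE. Qed.

Lemma tE a a' : lC a (rC g a') = t2 a a'.
Proof. by apply: dpext => ij; rewrite lCE rCE gE mul1r t2E. Qed.

Lemma iota_coinv b : coinv I Bq Bqq (fun i j x => pl i j x) (fun i j x => pr i j x) g (iota b).
Proof.
by apply: dpext => ij; rewrite lCE rCE gE !mkAE mulr1 mul1r pl_comp pr_comp.
Qed.

Lemma galois_tensor :
  is_tensor_product (Aty I Bq) (coinv I Bq Bqq (fun i j x => pl i j x) (fun i j x => pr i j x) g)
    (Aty I Bq) (Aty I Bq) (Cty I Bqq) (mulA I Bq) (mulA I Bq) (fun a a' => lC a (rC g a')).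
Proof.
split.
  split.
  - by move=> a a' a''; rewrite !tE; apply: dpext => ij; rewrite dpaddE !t2E dpaddE rmorphD mulrDl.
  - by move=> a a' a''; rewrite !tE; apply: dpext => ij; rewrite dpaddE !t2E dpaddE rmorphD mulrDr.
  - move=> a r a' hr; rewrite !tE; apply: dpext => ij; rewrite !t2E !ffunE !rmorphM.
    have := congr1 (fun c : Cty I Bqq => c ij) hr; rewrite /= lCE rCE gE mulr1 mul1r => ->.
    by rewrite mulrA.
move=> X f [f1 f2 fb].
have fb' a b a' : f (ract a b) a' = f a (lact b a').
  have -> : ract a b = mulA I Bq a (iota b) by apply: dpext => i; rewrite ractE !ffunE.
  have -> : lact b a' = mulA I Bq (iota b) a' by apply: dpext => i; rewrite lactE !ffunE.
  by apply: fb; apply: iota_coinv.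
have [h [hA ht hu]] := @tensAA X f f1 f2 fb'.
exists h; split=> //.
- by move=> a a'; rewrite tE.
- by move=> h' ah' h't; apply: hu => // a a'; rewrite -tE.
Qed.

Lemma counit_g : counit_is B I Bq Bqq (fun i b => p i b) (fun i j b => pij i j b) g (oneA I Bq).
Proof.
move=> b hb i; rewrite ffunE /=.
have := hb i i; rewrite ffunE /= => e.
have : pij i i (b i i - 1) = 0 by rewrite rmorphB e rmorph1 subrr.
case/pij_ker=> x [y [hx hy exy]].
have : p i (b i i - 1) = 0 by rewrite exy rmorphD !p_J // addr0.
by rewrite rmorphB rmorph1 => /eqP; rewrite subr_eq0 => /eqP ->.
Qed.

Lemma coprod_g : forall (T : zmodType) (t : Cty I Bqq -> Cty I Bqq -> T),
    is_tensor_product (Aty I Bq) (fun _ : Aty I Bq => True) (Cty I Bqq) (Cty I Bqq) T rC lC t ->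
    coprod_is B I Bqq (fun i j b => pij i j b) T t g (t g g).
Proof.
move=> T t [[tA1 tA2 tB] _] b hb.
have at1 c' : additive_fun _ T (t ^~ c') by move=> x y; apply: tA1.
have at2 c : additive_fun _ T (t c) by move=> x y; apply: tA2.
pose e' kk := mkC (fun mj => pij mj.1 mj.2 (if kk == mj.2 then 1 else 0)).
pose ck kk := mkC (fun il => pij il.1 il.2 (b il.1 kk)).
have gsum : g = \sum_kk e' kk.
  apply: dpext => -[m j]; rewrite dpsumE ffunE (bigD1 j) //= mkCE /= eqxx.
  by rewrite big1 ?addr0 // => kk /negbTE kj; rewrite mkCE /= kj rmorph0.
have key kk : t (ck kk) (e' kk) = t g (e' kk).
  have H i : exists y, J kk y /\ forall l, pij i l (b i kk) = pij i l 1 + pij i l y.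
    have := hb i kk; rewrite ffunE /= => e.
    have : pij i kk (b i kk - 1) = 0 by rewrite rmorphB e subrr.
    case/pij_ker=> x [y [hx hy exy]]; exists y; split=> // l.
    by rewrite -(subrK 1 (b i kk)) exy !rmorphD pij_Jl // add0r addrC.
  pose Y i := proj1_sig (constructive_indefinite_description _ (H i)).
  have YP i : J kk (Y i) /\ forall l, pij i l (b i kk) = pij i l 1 + pij i l (Y i).
    exact: (proj2_sig (constructive_indefinite_description _ (H i))).
  have -> : ck kk = g + \sum_i rC (lC (ee i) g) (iota (Y i)).
    apply: dpext => -[i' l]; rewrite mkCE dpaddE dpsumE /= (proj2 (YP i')) gE rmorph1.
    congr (_ + _); rewrite (bigD1 i') //= rCE lCE gE !mkAE /= eqxx rmorph1 !mul1r pr_comp.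
    rewrite big1 ?addr0 // => i /negbTE ii.
    by rewrite rCE lCE mkAE /= ii rmorph0 !mul0r.
  rewrite tA1 (afsum (at1 _)) big1 ?addr0 // => i _.
  rewrite tB //.
  have -> : lC (iota (Y i)) (e' kk) = 0.
    apply: dpext => -[m j]; rewrite lCE dp0E mkCE mkAE /=.
    case: eqP => [<-|_]; last by rewrite rmorph0 mulr0.
    by rewrite rmorph1 mulr1 pl_comp pij_Jr //; case: (YP i).
  exact: (af0 (at2 _)).
rewrite {2}gsum (afsum (at2 g)) /=; apply: eq_bigr => kk _.
by rewrite -key.
Qed.

Lemma part1 : galois_coring B I Bq Bqq (fun i b => p i b) (fun i j b => pij i j b)
       (fun i j x => pl i j x) (fun i j x => pr i j x) g.
Proof.
split; last exact: galois_tensor.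
split; [exact: counit_g | exact: coprod_g].
Qed.

Definition Kset (x : I * I * I) (b : B) : Prop :=
  exists x1 x2 x3, [/\ J x.1.1 x1, J x.1.2 x2, J x.2 x3 & b = x1 + x2 + x3].
Lemma Kset0 x : Kset x 0.
Proof. by exists 0, 0, 0; split; rewrite ?addr0 //; apply: J0. Qed.
Lemma KsetD x u v : Kset x u -> Kset x v -> Kset x (u + v).
Proof.
case=> [u1 [u2 [u3 [h1 h2 h3 ->]]]] [v1 [v2 [v3 [k1 k2 k3 ->]]]].
exists (u1 + v1), (u2 + v2), (u3 + v3); split; try by apply: JD.
by rewrite (addrACA (u1 + u2)) (addrACA u1).
Qed.
Lemma KsetN x u : Kset x u -> Kset x (- u).
Proof.
case=> [u1 [u2 [u3 [h1 h2 h3 ->]]]].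
by exists (- u1), (- u2), (- u3); split; try apply: JN; rewrite // !opprD.
Qed.
Lemma KMr x u c : Kset x u -> Kset x (u * c).
Proof.
case=> [u1 [u2 [u3 [h1 h2 h3 ->]]]].
by exists (u1 * c), (u2 * c), (u3 * c); split; try apply: JMr; rewrite // !mulrDl.
Qed.
Lemma KMl x u c : Kset x u -> Kset x (c * u).
Proof.
case=> [u1 [u2 [u3 [h1 h2 h3 ->]]]].
by exists (c * u1), (c * u2), (c * u3); split; try apply: JMl; rewrite // !mulrDr.
Qed.

Definition Ksg x : subgrp B := @SubGrp B (Kset x) (Kset0 x) (@KsetD x) (@KsetN x).
Local Notation qx x := (qpi (Ksg x)).

Lemma diff0 i j u v : pij i j u = pij i j v -> pij i j (u - v) = 0.
Proof. by move=> e; rewrite rmorphB e subrr. Qed.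

Lemma K_ij i j k u v : pij i j u = pij i j v -> Kset (i, j, k) (u - v).
Proof.
move/diff0/pij_ker=> [x [y [hx hy ->]]].
by exists x, y, 0; split=> //; [apply: J0 | rewrite addr0].
Qed.
Lemma K_ik i j k u v : pij i k u = pij i k v -> Kset (i, j, k) (u - v).
Proof.
move/diff0/pij_ker=> [x [y [hx hy ->]]].
by exists x, 0, y; split=> //; [apply: J0 | rewrite addr0].
Qed.
Lemma K_jk i j k u v : pij j k u = pij j k v -> Kset (i, j, k) (u - v).
Proof.
move/diff0/pij_ker=> [x [y [hx hy ->]]].
by exists 0, x, y; split=> //; [apply: J0 | rewrite add0r].
Qed.
Lemma K_ki i j k u v : pij k i u = pij k i v -> Kset (i, j, k) (u - v).
Proof.
move/diff0/pij_ker=> [x [y [hx hy ->]]].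
by exists y, 0, x; split=> //; [apply: J0 | rewrite addr0 addrC].
Qed.
Lemma K_kj i j k u v : pij k j u = pij k j v -> Kset (i, j, k) (u - v).
Proof.
move/diff0/pij_ker=> [x [y [hx hy ->]]].
by exists 0, y, x; split=> //; [apply: J0 | rewrite add0r addrC].
Qed.
Lemma K_k i j k u v : p k u = p k v -> Kset (i, j, k) (u - v).
Proof.
move=> e; have : p k (u - v) = 0 by rewrite rmorphB e subrr.
move/p_ker=> h; exists 0, 0, (u - v); split=> //; try apply: J0.
by rewrite !add0r.
Qed.

Lemma qK x u v : Kset x (u - v) -> qx x u = qx x v.
Proof. by move=> h; apply/qpi_eq. Qed.
Lemma qmulr x u v c : qx x u = qx x v -> qx x (u * c) = qx x (v * c).
Proof. by move/qpi_eq=> h; apply/qpi_eq; rewrite -mulrBl; apply: KMr. Qed.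
Lemma qmull x u v c : qx x u = qx x v -> qx x (c * u) = qx x (c * v).
Proof. by move/qpi_eq=> h; apply/qpi_eq; rewrite -mulrBr; apply: KMl. Qed.
Lemma qB x u v : qx x (u - v) = qx x u - qx x v.
Proof. by rewrite qpiD qpiN. Qed.

Definition T3 := dprod (I * I * I)%type (fun x => quo B (Ksg x)).
Definition mkT (F : forall x : I * I * I, quo B (Ksg x)) : T3 :=
  @finfun (I * I * I)%type (fun x => quo B (Ksg x)) F.
Lemma mkTE F x : mkT F x = F x. Proof. by rewrite ffunE. Qed.

Definition Eij i j (b : B) : C :=
  mkC (fun ij' => if ij' == (i, j) then pij ij'.1 ij'.2 b else 0).
Lemma EijD i j u v : Eij i j (u + v) = Eij i j u + Eij i j v.
Proof.
by apply: dpext => ij; rewrite dpaddE !mkCE; case: eqP => _; rewrite ?rmorphD ?addr0.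
Qed.
Lemma Eij_Jl i j u : J i u -> Eij i j u = 0.
Proof. by move=> h; apply: dpext => ij; rewrite dp0E mkCE; case: eqP => [->|_] //=; rewrite pij_Jl. Qed.
Lemma Eij_Jr i j u : J j u -> Eij i j u = 0.
Proof. by move=> h; apply: dpext => ij; rewrite dp0E mkCE; case: eqP => [->|_] //=; rewrite pij_Jr. Qed.
Lemma decompE (c : C) : c = \sum_(ij : I * I) Eij ij.1 ij.2 (liftC _ _ (c ij)).
Proof.
apply: dpext => -[i' j']; rewrite dpsumE (bigD1 (i', j')) //= mkCE eqxx liftCE.
by rewrite big1 ?addr0 // => -[i j] /negbTE ne; rewrite mkCE eq_sym ne.
Qed.

Definition gg (a : A) : C := mkC (fun ij => pl ij.1 ij.2 (a ij.1) - pr ij.1 ij.2 (a ij.2)).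

Lemma gg_add : additive_fun A C gg.
Proof. by move=> a a'; apply: dpext => ij; rewrite dpaddE !mkCE !dpaddE !rmorphD opprD addrACA. Qed.
Lemma iota_add : additive_fun B A iota.
Proof. by move=> u v; apply: dpext => i; rewrite dpaddE !mkAE rmorphD. Qed.

Lemma gg_completion a : in_completion I Bq Bqq (fun i j x => pl i j x) (fun i j x => pr i j x) a ->
  gg a = 0.
Proof. by move=> h; apply: dpext => -[i j]; rewrite mkCE dp0E /= h subrr. Qed.

Lemma t2_tensor :
  is_tensor_product B (fun _ => True) A A C ract lact t2.
Proof.
split.
  split.
  - by move=> a a' a''; apply: dpext => ij; rewrite dpaddE !t2E dpaddE rmorphD mulrDl.
  - by move=> a a' a''; apply: dpext => ij; rewrite dpaddE !t2E dpaddE rmorphD mulrDr.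
  - move=> a r a' _; apply: dpext => ij; rewrite !t2E ractE lactE !rmorphM.
    by rewrite pl_comp pr_comp mulrA.
move=> X f [f1 f2 fb].
have [h [hA ht hu]] := @tensAA X f f1 f2 (fun a b a' => fb a b a' Logic.I).
by exists h.
Qed.

Definition a3L (c : C) (b : B) : C := mkC (fun ij => c ij * pij ij.1 ij.2 b).
Definition t3L (c : C) (a : A) : T3 :=
  mkT (fun x => qx x (liftC x.1.1 x.1.2 (c (x.1.1, x.1.2)) * liftA x.2 (a x.2))).
Definition FL (y : A) : C := mkC (fun ij => pr ij.1 ij.2 (y ij.2)).
Definition GL (y : C) : T3 :=
  mkT (fun x => qx x (liftC x.1.1 x.2 (y (x.1.1, x.2))) - qx x (liftC x.1.2 x.2 (y (x.1.2, x.2)))).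

Lemma Eij_a3L i j u : Eij i j u = a3L (Eij i j 1) u.
Proof.
by apply: dpext => ij; rewrite !mkCE; case: eqP => _; rewrite ?rmorph1 ?mul1r ?mul0r.
Qed.
Lemma Eij_mulL i j u v : Eij i j (u * v) = a3L (Eij i j u) v.
Proof.
by apply: dpext => ij; rewrite !mkCE; case: eqP => _; rewrite ?rmorphM ?mul0r.
Qed.

Lemma t3L_tensor : is_tensor_product B (fun _ => True) C A T3 a3L lact t3L.
Proof.
split.
  split.
  - move=> c c' a; apply: dpext => -[[i j] k]; rewrite dpaddE !mkTE /= -qpiD -mulrDl.
    by apply: qmulr; apply: qK; apply: K_ij; rewrite rmorphD !liftCE dpaddE.
  - move=> c a a'; apply: dpext => -[[i j] k]; rewrite dpaddE !mkTE /= -qpiD -mulrDr.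
    by apply: qmull; apply: qK; apply: K_k; rewrite rmorphD !liftAE dpaddE.
  - move=> c r a _; apply: dpext => -[[i j] k]; rewrite !mkTE /=.
    transitivity (qx (i, j, k) (liftC i j (c (i, j)) * r * liftA k (a k))).
      by apply: qmulr; apply: qK; apply: K_ij; rewrite mkCE rmorphM !liftCE.
    by rewrite -mulrA; apply: qmull; apply: qK; apply: K_k; rewrite lactE rmorphM !liftAE.
move=> X f [f1 f2 fb].
have af1 a : additive_fun C X (f ^~ a) by move=> x y; apply: f1.
have af2 c : additive_fun A X (f c) by move=> x y; apply: f2.
pose Phi (x : I * I * I) b := f (Eij x.1.1 x.1.2 b) (ee x.2).
have PhiD x u v : Phi x (u + v) = Phi x u + Phi x v by rewrite /Phi EijD f1.
have Phiker x u : Kset x u -> Phi x u = 0.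
  case=> [u1 [u2 [u3 [h1 h2 h3 ->]]]]; rewrite !PhiD /Phi Eij_Jl // Eij_Jr //.
  rewrite !(af0 (af1 _)) !add0r Eij_a3L fb // ee_lact_J //.
  exact: (af0 (af2 _)).
have Phieq x u v : qx x u = qx x v -> Phi x u = Phi x v.
  move/qpi_eq=> h; rewrite -(subrK v u) PhiD Phiker ?add0r //.
pose h (z : T3) := \sum_x Phi x (val (z x)).
exists h; split.
- move=> z z'; rewrite /h -big_split; apply: eq_bigr => x _ /=.
  by rewrite -PhiD; apply: Phieq; rewrite qpiD !qpi_val dpaddE.
- move=> c a; rewrite /h.
  have -> : f c a = \sum_(ij : I * I) \sum_k
      f (Eij ij.1 ij.2 (liftC _ _ (c ij))) (lact (liftA k (a k)) (ee k)).
    rewrite {1}(decompE c) (afsum (af1 _)); apply: eq_bigr => ij _.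
    by rewrite {1}(decompA' a) (afsum (af2 _)).
  rewrite pair_big; apply: eq_bigr => -[[i j] k] _ /=.
  rewrite mkTE (Phieq _ _ _ (qpi_val _)) /Phi /= -fb // -Eij_mulL.
  by [].
- move=> h' ah' h't z.
  have ez : z = \sum_x t3L (Eij x.1.1 x.1.2 (val (z x))) (ee x.2).
    apply: dpext => -[[i' j'] k']; rewrite dpsumE (bigD1 (i', j', k')) //= mkTE /=.
    rewrite mkCE eqxx mkAE eqxx.
    have -> : qx (i', j', k') (liftC i' j' (pij i' j' (val (z (i', j', k'))))
                 * liftA k' 1) = qx (i', j', k') (val (z (i', j', k')) * 1).
      rewrite (@qmulr _ _ (val (z (i', j', k')))); last first.
        by apply: qK; apply: K_ij; rewrite liftCE.
      by apply: qmull; apply: qK; apply: K_k; rewrite liftAE rmorph1.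
    rewrite mulr1 qpi_val big1 ?addr0 // => -[[i j] k] ne; rewrite mkTE /= mkCE mkAE.
    case: (eqVneq (i', j') (i, j)) => [e|ne1].
      case: e ne => <- <- ne; have nk : k != k'.
        by apply: contra ne => /eqP ->.
      rewrite (negbTE nk) (@qmull _ _ 0); first by rewrite mulr0.
      by apply: qK; apply: K_k; rewrite liftAE rmorph0.
    rewrite (@qmulr _ _ 0); first by rewrite mul0r.
    by apply: qK; apply: K_ij; rewrite liftCE rmorph0.
  rewrite {1}ez (afsum ah'); apply: eq_bigr => x _; rewrite h't.
  by [].
Qed.

Lemma rmodB : rmodule B B (fun m r => m * r).
Proof. by split=> *; rewrite ?mulr1 ?mulrA ?mulrDl ?mulrDr. Qed.
Lemma rmodA : rmodule B A ract.
Proof.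
split.
- by move=> a; apply: dpext => i; rewrite ractE rmorph1 mulr1.
- by move=> *; rewrite ractM.
- by move=> a a' b; apply: dpext => i; rewrite dpaddE !ractE ?dpaddE mulrDl.
- by move=> *; rewrite ractD.
Qed.
Lemma rmodCL : rmodule B C a3L.
Proof.
split.
- by move=> c; apply: dpext => i; rewrite mkCE rmorph1 mulr1.
- by move=> c a b; apply: dpext => i; rewrite !mkCE rmorphM mulrA.
- by move=> c c' b; apply: dpext => i; rewrite dpaddE !mkCE ?dpaddE mulrDl.
- by move=> c a b; apply: dpext => i; rewrite dpaddE !mkCE rmorphD mulrDr.
Qed.
Lemma lin_iotaL : rlinear B B A (fun m r => m * r) ract iota.
Proof. by split; [exact: iota_add | move=> m a; apply: dpext => i; rewrite ractE !mkAE rmorphM]. Qed.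
Lemma lin_ggL : rlinear B A C ract a3L gg.
Proof.
split; first exact: gg_add.
move=> a b; apply: dpext => -[i j]; rewrite !mkCE /= !ractE !rmorphM pl_comp pr_comp.
by rewrite mulrBl.
Qed.
Lemma t1L_tensor : is_tensor_product B (fun _ => True) B A A (fun m r => m * r) lact lact.
Proof.
split.
  split.
  - by move=> m m' a; apply: dpext => i; rewrite dpaddE !lactE rmorphD mulrDl.
  - by move=> m a a'; apply: dpext => i; rewrite dpaddE !lactE ?dpaddE mulrDr.
  - by move=> m r a _; apply: dpext => i; rewrite !lactE rmorphM mulrA.
move=> X f [f1 f2 fb].
exists (f 1); split.
- by move=> x y; apply: f2.
- by move=> m n; rewrite -fb // mul1r.
- move=> h' ah' h't x.
  have {1}-> : x = lact 1 x by apply: dpext => i; rewrite lactE rmorph1 mul1r.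
  by rewrite h't.
Qed.
Lemma FL_add : additive_fun A C FL.
Proof. by move=> a a'; apply: dpext => ij; rewrite dpaddE !mkCE ?dpaddE rmorphD. Qed.
Lemma qlift_ik i j k u v :
  qx (i, j, k) (liftC i k (u + v)) = qx (i, j, k) (liftC i k u) + qx (i, j, k) (liftC i k v).
Proof. by rewrite -qpiD; apply: qK; apply: K_ik; rewrite rmorphD !liftCE. Qed.
Lemma qlift_jk i j k u v :
  qx (i, j, k) (liftC j k (u + v)) = qx (i, j, k) (liftC j k u) + qx (i, j, k) (liftC j k v).
Proof. by rewrite -qpiD; apply: qK; apply: K_jk; rewrite rmorphD !liftCE. Qed.
Lemma GL_add : additive_fun C T3 GL.
Proof.
move=> y y'; apply: dpext => -[[i j] k]; rewrite dpaddE !mkTE /= !dpaddE.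
by rewrite qlift_ik qlift_jk opprD addrACA.
Qed.
Lemma FL_comp m n : FL (lact m n) = t2 (iota m) n.
Proof. by apply: dpext => ij; rewrite mkCE t2E lactE mkAE rmorphM pr_comp pl_comp. Qed.
Lemma GL_comp m n : GL (t2 m n) = t3L (gg m) n.
Proof.
apply: dpext => -[[i j] k]; rewrite !mkTE /= !t2E mkCE /=.
have e1 : qx (i, j, k) (liftC i k (pl i k (m i) * pr i k (n k)))
   = qx (i, j, k) (liftA i (m i) * liftA k (n k)).
  by apply: qK; apply: K_ik; rewrite liftCE rmorphM -pl_comp -pr_comp !liftAE.
have e2 : qx (i, j, k) (liftC j k (pl j k (m j) * pr j k (n k)))
   = qx (i, j, k) (liftA j (m j) * liftA k (n k)).
  by apply: qK; apply: K_jk; rewrite liftCE rmorphM -pl_comp -pr_comp !liftAE.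
have e3 : qx (i, j, k) (liftC i j (pl i j (m i) - pr i j (m j)) * liftA k (n k))
   = qx (i, j, k) ((liftA i (m i) - liftA j (m j)) * liftA k (n k)).
  by apply: qmulr; apply: qK; apply: K_ij; rewrite liftCE rmorphB -pl_comp -pr_comp !liftAE.
by rewrite e1 e2 e3 mulrBl qB.
Qed.
Lemma exactL : exact_at A C T3 FL GL.
Proof.
move=> y; split.
- move=> h0; exists (mkA (fun k => p k (liftC k k (y (k, k))))).
  apply: dpext => -[i k]; rewrite mkCE mkAE /= pr_comp.
  have := congr1 (fun z : T3 => z (i, k, k)) h0; rewrite /= mkTE dp0E /=.
  move/eqP; rewrite subr_eq0 => /eqP /qpi_eq [x1 [x2 [x3 [/= h1 h2 h3 e]]]].
  have : pij i k (liftC i k (y (i, k)) - liftC k k (y (k, k))) = 0.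
    by rewrite e !rmorphD pij_Jl // pij_Jr // pij_Jr // !addr0.
  by rewrite rmorphB liftCE => /eqP; rewrite subr_eq0 => /eqP <-.
- case=> x <-; apply: dpext => -[[i j] k]; rewrite mkTE dp0E /= !mkCE /=.
  have e1 : qx (i, j, k) (liftC i k (pr i k (x k))) = qx (i, j, k) (liftA k (x k)).
    by apply: qK; apply: K_ik; rewrite liftCE -pr_comp liftAE.
  have e2 : qx (i, j, k) (liftC j k (pr j k (x k))) = qx (i, j, k) (liftA k (x k)).
    by apply: qK; apply: K_jk; rewrite liftCE -pr_comp liftAE.
  by rewrite e1 e2 subrr.
Qed.

Lemma part2L : faithfully_flat_left B A lact ->
  complete_covering B I Bq Bqq (fun i b => p i b) (fun i j x => pl i j x) (fun i j x => pr i j x).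
Proof.
case=> _ ff a ha.
have ex := ff B A C (fun m r => m * r) ract a3L iota gg rmodB rmodA rmodCL lin_iotaL lin_ggL
  A C T3 lact t2 t3L t1L_tensor t2_tensor t3L_tensor FL GL FL_add GL_add FL_comp GL_comp.
have [b hb] := ((proj2 ex) exactL a).1 (gg_completion a ha).
by exists b => i; rewrite -hb mkAE.
Qed.

Definition a3R (r : B) (c : C) : C := mkC (fun ij => pij ij.1 ij.2 r * c ij).
Definition t3R (a : A) (c : C) : T3 :=
  mkT (fun x => qx x (liftA x.2 (a x.2) * liftC x.1.1 x.1.2 (c (x.1.1, x.1.2)))).
Definition FR (y : A) : C := mkC (fun ij => pl ij.1 ij.2 (y ij.1)).
Definition GR (y : C) : T3 :=
  mkT (fun x => qx x (liftC x.2 x.1.1 (y (x.2, x.1.1))) - qx x (liftC x.2 x.1.2 (y (x.2, x.1.2)))).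

Lemma Eij_a3R i j u : Eij i j u = a3R u (Eij i j 1).
Proof.
by apply: dpext => ij; rewrite !mkCE; case: eqP => _; rewrite ?rmorph1 ?mulr1 ?mulr0.
Qed.
Lemma Eij_mulR i j u v : Eij i j (u * v) = a3R u (Eij i j v).
Proof.
by apply: dpext => ij; rewrite !mkCE; case: eqP => _; rewrite ?rmorphM ?mulr0.
Qed.

Lemma t3R_tensor : is_tensor_product B (fun _ => True) A C T3 ract a3R t3R.
Proof.
split.
  split.
  - move=> a a' c; apply: dpext => -[[i j] k]; rewrite dpaddE !mkTE /= -qpiD -mulrDl.
    by apply: qmulr; apply: qK; apply: K_k; rewrite rmorphD !liftAE dpaddE.
  - move=> a c c'; apply: dpext => -[[i j] k]; rewrite dpaddE !mkTE /= -qpiD -mulrDr.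
    by apply: qmull; apply: qK; apply: K_ij; rewrite rmorphD !liftCE dpaddE.
  - move=> a r c _; apply: dpext => -[[i j] k]; rewrite !mkTE /=.
    transitivity (qx (i, j, k) (liftA k (a k) * r * liftC i j (c (i, j)))).
      by apply: qmulr; apply: qK; apply: K_k; rewrite ractE rmorphM !liftAE.
    by rewrite -mulrA; apply: qmull; apply: qK; apply: K_ij; rewrite mkCE rmorphM !liftCE.
move=> X f [f1 f2 fb].
have af1 c : additive_fun A X (f ^~ c) by move=> x y; apply: f1.
have af2 a : additive_fun C X (f a) by move=> x y; apply: f2.
pose Phi (x : I * I * I) b := f (ee x.2) (Eij x.1.1 x.1.2 b).
have PhiD x u v : Phi x (u + v) = Phi x u + Phi x v by rewrite /Phi EijD f2.
have Phiker x u : Kset x u -> Phi x u = 0.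
  case=> [u1 [u2 [u3 [h1 h2 h3 ->]]]]; rewrite !PhiD /Phi Eij_Jl // Eij_Jr //.
  rewrite !(af0 (af2 _)) !add0r Eij_a3R -fb // ee_ract_J //.
  exact: (af0 (af1 _)).
have Phieq x u v : qx x u = qx x v -> Phi x u = Phi x v.
  move/qpi_eq=> h; rewrite -(subrK v u) PhiD Phiker ?add0r //.
pose h (z : T3) := \sum_x Phi x (val (z x)).
exists h; split.
- move=> z z'; rewrite /h -big_split; apply: eq_bigr => x _ /=.
  by rewrite -PhiD; apply: Phieq; rewrite qpiD !qpi_val dpaddE.
- move=> a c; rewrite /h.
  have -> : f a c = \sum_(ij : I * I) \sum_k
      f (ract (ee k) (liftA k (a k))) (Eij ij.1 ij.2 (liftC _ _ (c ij))).
    rewrite exchange_big /=.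
    rewrite {1}(decompA a) (afsum (af1 _)); apply: eq_bigr => k _.
    by rewrite {1}(decompE c) (afsum (af2 _)).
  rewrite pair_big; apply: eq_bigr => -[[i j] k] _ /=.
  by rewrite mkTE (Phieq _ _ _ (qpi_val _)) /Phi /= fb // -Eij_mulR.
- move=> h' ah' h't z.
  have ez : z = \sum_x t3R (ee x.2) (Eij x.1.1 x.1.2 (val (z x))).
    apply: dpext => -[[i' j'] k']; rewrite dpsumE (bigD1 (i', j', k')) //= mkTE /=.
    rewrite mkCE eqxx mkAE eqxx.
    have -> : qx (i', j', k') (liftA k' 1 * liftC i' j' (pij i' j' (val (z (i', j', k')))))
                 = qx (i', j', k') (1 * val (z (i', j', k'))).
      rewrite (@qmulr _ _ 1); last first.
        by apply: qK; apply: K_k; rewrite liftAE rmorph1.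
      by apply: qmull; apply: qK; apply: K_ij; rewrite liftCE.
    rewrite mul1r qpi_val big1 ?addr0 // => -[[i j] k] ne; rewrite mkTE /= mkCE mkAE.
    case: (eqVneq (i', j') (i, j)) => [e|ne1].
      case: e ne => <- <- ne; have nk : k != k'.
        by apply: contra ne => /eqP ->.
      rewrite (negbTE nk) (@qmulr _ _ 0); first by rewrite mul0r.
      by apply: qK; apply: K_k; rewrite liftAE rmorph0.
    rewrite (@qmull _ _ 0); first by rewrite mulr0.
    by apply: qK; apply: K_ij; rewrite liftCE rmorph0.
  rewrite {1}ez (afsum ah'); apply: eq_bigr => x _; rewrite h't.
  by [].
Qed.

Lemma lmodB : lmodule B B (fun r m => r * m).
Proof. by split=> *; rewrite ?mul1r ?mulrA ?mulrDl ?mulrDr. Qed.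
Lemma lmodA : lmodule B A lact.
Proof.
split.
- by move=> a; apply: dpext => i; rewrite lactE rmorph1 mul1r.
- by move=> a r s; apply: dpext => i; rewrite !lactE rmorphM mulrA.
- by move=> a a' r; apply: dpext => i; rewrite dpaddE !lactE ?dpaddE mulrDr.
- by move=> a r s; apply: dpext => i; rewrite dpaddE !lactE rmorphD mulrDl.
Qed.
Lemma lmodCR : lmodule B C a3R.
Proof.
split.
- by move=> c; apply: dpext => i; rewrite mkCE rmorph1 mul1r.
- by move=> c a b; apply: dpext => i; rewrite !mkCE rmorphM mulrA.
- by move=> c c' b; apply: dpext => i; rewrite dpaddE !mkCE ?dpaddE mulrDr.
- by move=> c a b; apply: dpext => i; rewrite dpaddE !mkCE rmorphD mulrDl.
Qed.
Lemma lin_iotaR : llinear B B A (fun r m => r * m) lact iota.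
Proof. by split; [exact: iota_add | move=> m a; apply: dpext => i; rewrite lactE !mkAE rmorphM]. Qed.
Lemma lin_ggR : llinear B A C lact a3R gg.
Proof.
split; first exact: gg_add.
move=> a b; apply: dpext => -[i j]; rewrite !mkCE /= !lactE !rmorphM pl_comp pr_comp.
by rewrite mulrBr.
Qed.
Lemma t1R_tensor : is_tensor_product B (fun _ => True) A B A ract (fun r m => r * m) ract.
Proof.
split.
  split.
  - by move=> a a' m; apply: dpext => i; rewrite dpaddE !ractE ?dpaddE mulrDl.
  - by move=> a m m'; apply: dpext => i; rewrite dpaddE !ractE rmorphD mulrDr.
  - by move=> a r m _; rewrite ractM.
move=> X f [f1 f2 fb].
exists (fun a => f a 1); split.
- by move=> x y; apply: f1.
- by move=> n m; rewrite fb // mulr1.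
- move=> h' ah' h't x.
  have {1}-> : x = ract x 1 by apply: dpext => i; rewrite ractE rmorph1 mulr1.
  by rewrite h't.
Qed.
Lemma FR_add : additive_fun A C FR.
Proof. by move=> a a'; apply: dpext => ij; rewrite dpaddE !mkCE ?dpaddE rmorphD. Qed.
Lemma qlift_ki i j k u v :
  qx (i, j, k) (liftC k i (u + v)) = qx (i, j, k) (liftC k i u) + qx (i, j, k) (liftC k i v).
Proof. by rewrite -qpiD; apply: qK; apply: K_ki; rewrite rmorphD !liftCE. Qed.
Lemma qlift_kj i j k u v :
  qx (i, j, k) (liftC k j (u + v)) = qx (i, j, k) (liftC k j u) + qx (i, j, k) (liftC k j v).
Proof. by rewrite -qpiD; apply: qK; apply: K_kj; rewrite rmorphD !liftCE. Qed.
Lemma GR_add : additive_fun C T3 GR.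
Proof.
move=> y y'; apply: dpext => -[[i j] k]; rewrite dpaddE !mkTE /= !dpaddE.
by rewrite qlift_ki qlift_kj opprD addrACA.
Qed.
Lemma FR_comp n m : FR (ract n m) = t2 n (iota m).
Proof. by apply: dpext => ij; rewrite mkCE t2E ractE mkAE rmorphM pr_comp pl_comp. Qed.
Lemma GR_comp n m : GR (t2 n m) = t3R n (gg m).
Proof.
apply: dpext => -[[i j] k]; rewrite !mkTE /= !t2E mkCE /=.
have e1 : qx (i, j, k) (liftC k i (pl k i (n k) * pr k i (m i)))
   = qx (i, j, k) (liftA k (n k) * liftA i (m i)).
  by apply: qK; apply: K_ki; rewrite liftCE rmorphM -pl_comp -pr_comp !liftAE.
have e2 : qx (i, j, k) (liftC k j (pl k j (n k) * pr k j (m j)))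
   = qx (i, j, k) (liftA k (n k) * liftA j (m j)).
  by apply: qK; apply: K_kj; rewrite liftCE rmorphM -pl_comp -pr_comp !liftAE.
have e3 : qx (i, j, k) (liftA k (n k) * liftC i j (pl i j (m i) - pr i j (m j)))
   = qx (i, j, k) (liftA k (n k) * (liftA i (m i) - liftA j (m j))).
  by apply: qmull; apply: qK; apply: K_ij; rewrite liftCE rmorphB -pl_comp -pr_comp !liftAE.
by rewrite e1 e2 e3 mulrBr qB.
Qed.
Lemma exactR : exact_at A C T3 FR GR.
Proof.
move=> y; split.
- move=> h0; exists (mkA (fun k => p k (liftC k k (y (k, k))))).
  apply: dpext => -[k i]; rewrite mkCE mkAE /= pl_comp.
  have := congr1 (fun z : T3 => z (i, k, k)) h0; rewrite /= mkTE dp0E /=.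
  move/eqP; rewrite subr_eq0 => /eqP /qpi_eq [x1 [x2 [x3 [/= h1 h2 h3 e]]]].
  have : pij k i (liftC k i (y (k, i)) - liftC k k (y (k, k))) = 0.
    by rewrite e !rmorphD pij_Jr // pij_Jl // pij_Jl // !addr0.
  by rewrite rmorphB liftCE => /eqP; rewrite subr_eq0 => /eqP <-.
- case=> x <-; apply: dpext => -[[i j] k]; rewrite mkTE dp0E /= !mkCE /=.
  have e1 : qx (i, j, k) (liftC k i (pl k i (x k))) = qx (i, j, k) (liftA k (x k)).
    by apply: qK; apply: K_ki; rewrite liftCE -pl_comp liftAE.
  have e2 : qx (i, j, k) (liftC k j (pl k j (x k))) = qx (i, j, k) (liftA k (x k)).
    by apply: qK; apply: K_kj; rewrite liftCE -pl_comp liftAE.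
  by rewrite e1 e2 subrr.
Qed.

Lemma part2R : faithfully_flat_right B A ract ->
  complete_covering B I Bq Bqq (fun i b => p i b) (fun i j x => pl i j x) (fun i j x => pr i j x).
Proof.
case=> _ ff a ha.
have ex := ff B A C (fun r m => r * m) lact a3R iota gg lmodB lmodA lmodCR lin_iotaR lin_ggR
  A C T3 ract t2 t3R t1R_tensor t2_tensor t3R_tensor FR GR FR_add GR_add FR_comp GR_comp.
have [b hb] := ((proj2 ex) exactR a).1 (gg_completion a ha).
by exists b => i; rewrite -hb mkAE.
Qed.

End Main.
Theorem theorem3p4
  (k : fieldType) (B : pzRingType) (alg : {rmorphism k -> B})
  (alg_central : central_structure_map k B alg)
  (I : finType) (J : I -> B -> Prop)
  (J_ideal : forall i, two_sided_ideal B (J i))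
  (J_cover : forall b : B, (forall i, J i b) -> b = 0)
  (Bq : I -> pzRingType) (p : forall i, {rmorphism B -> Bq i})
  (p_surj : forall i (y : Bq i), exists b : B, p i b = y)
  (p_ker : forall i (b : B), p i b = 0 <-> J i b)
  (Bqq : I -> I -> pzRingType) (pij : forall i j, {rmorphism B -> Bqq i j})
  (pij_surj : forall i j (y : Bqq i j), exists b : B, pij i j b = y)
  (pij_ker : forall i j (b : B),
      pij i j b = 0 <-> exists x y, [/\ J i x, J j y & b = x + y])
  (pl : forall i j, {rmorphism Bq i -> Bqq i j})
  (pl_comp : forall i j (b : B), pl i j (p i b) = pij i j b)
  (pr : forall i j, {rmorphism Bq j -> Bqq i j})
  (pr_comp : forall i j (b : B), pr i j (p j b) = pij i j b) :
  (complete_covering B I Bq Bqq (fun i b => p i b)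
       (fun i j x => pl i j x) (fun i j x => pr i j x) ->
   galois_coring B I Bq Bqq (fun i b => p i b) (fun i j b => pij i j b)
       (fun i j x => pl i j x) (fun i j x => pr i j x)
       (gC B I Bqq (fun i j b => pij i j b)))
  /\
  ((faithfully_flat_left B (Aty I Bq) (lactBA B I Bq (fun i b => p i b))
    \/ faithfully_flat_right B (Aty I Bq) (ractAB B I Bq (fun i b => p i b))) ->
   complete_covering B I Bq Bqq (fun i b => p i b)
       (fun i j x => pl i j x) (fun i j x => pr i j x)).
Proof.
split.
- by move=> _; eapply part1; eassumption.
- by case=> h; [eapply part2L | eapply part2R]; eassumption.
Qed.
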